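(* Let $n\ge1$ and $\mathbb{P}\in\mathcal{P}_n$. For every $T\in\mathbb{R}_{++}^{2\times n}$ there exists a sequence $(T_k)_{k\ge1}\subset\mathbb{R}_{++}^{2\times n}$, $T_k=(T_{k,ij})$, such that $\mathbf{P}_{\mathbf{z}\sim\mathbb{P}}[z_j=T_{k,1j}/T_{k,2j}]=0$ for all $j\in[n]$ and all $k$, and \[ R_n(\mathbb{P},T)=\lim_{k\to\infty}R_n(\mathbb{P},T_k). \]
   Context: Scheduling on two machines with $n$ tasks. A processing-time matrix is $T\in\mathbb{R}_{++}^{2\times n}$; an allocation is $X\in\{0,1\}^{2\times n}$ with $X_{1j}+X_{2j}=1$; makespan $M(X,T)=\max_{i\in\{1,2\}}\sum_jX_{ij}T_{ij}$; $M^*(T)=\min_XM(X,T)$. $\mathcal{P}_n$ is the set of Borel probability measures on $\mathbb{R}^n$ supported in $\mathbb{R}_{++}^n$. For $\mathbb{P}\in\mathcal{P}_n$, algorithm $\mathcal{A}^{\mathbb{P}}$ draws $\mathbf{z}\sim\mathbb{P}$ and sends task $j$ to machine 1 iff $T_{1j}/T_{2j}<z_j$ (else to machine 2); $M(\mathbb{P},T)$ is the expected makespan of this random allocation and $R_n(\mathbb{P},T)=M(\mathbb{P},T)/M^*(T)$. *)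

(* Defs.v *)
From HB Require Import structures.
From mathcomp Require Import all_boot all_order all_algebra.
From mathcomp Require Import all_classical all_reals all_analysis.
Set Implicit Arguments. Unset Strict Implicit. Unset Printing Implicit Defensive.
Import Order.TTheory GRing.Theory Num.Theory.
Local Open Scope ring_scope.
Local Open Scope classical_set_scope.

(* Machines are indexed by 'I_2: mach1 = machine 1 (row 0), mach2 = machine 2 (row 1). *)
Definition mach1 : 'I_2 := @Ordinal 2 0 isT.
Definition mach2 : 'I_2 := @Ordinal 2 1 isT.

Section Sched.
Variables (R : realType) (n : nat).

Definition pos_matrix (T : 'M[R]_(2, n)) : Prop := forall i j, 0 < T i j.

(* An allocation X in {0,1}^{2 x n} with X_1j + X_2j = 1 is encoded by
   x : {ffun 'I_n -> bool}, x j = true iff X_1j = 1 (task j on machine 1). *)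
Definition makespan (x : {ffun 'I_n -> bool}) (T : 'M[R]_(2, n)) : R :=
  Num.max (\sum_(j < n | x j) T mach1 j) (\sum_(j < n | ~~ x j) T mach2 j).

Definition opt_makespan (T : 'M[R]_(2, n)) : R :=
  \big[Num.min / makespan [ffun => true] T]_(x : {ffun 'I_n -> bool}) makespan x T.

Definition alloc (T : 'M[R]_(2, n)) (z : n.-tuple R) : {ffun 'I_n -> bool} :=
  [ffun j => T mach1 j / T mach2 j < tnth z j].

(* P in P_n : a Borel probability on R^n (product sigma-algebra on n-tuples)
   supported in R_{++}^n *)
Definition supported_pos (P : probability (n.-tuple R) R) : Prop :=
  P [set z : n.-tuple R | forall j, 0 < tnth z j] = 1%E.

Definition exp_makespan (P : probability (n.-tuple R) R) (T : 'M[R]_(2, n)) : \bar R :=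
  (\int[P]_z (makespan (alloc T z) T)%:E)%E.

Definition Rn_ratio (P : probability (n.-tuple R) R) (T : 'M[R]_(2, n)) : \bar R :=
  (exp_makespan P T * ((opt_makespan T)^-1)%:E)%E.

End Sched.

(* Main.v *)
Require Import Defs.
From HB Require Import structures.
From mathcomp Require Import all_boot all_order all_algebra.
From mathcomp Require Import all_classical all_reals all_analysis.
From mathcomp Require Import finmap.
From mathcomp Require Import lra.
Import Order.TTheory GRing.Theory Num.Theory.
Import numFieldNormedType.Exports.
Import measurable_realfun.
Local Open Scope ring_scope.
Local Open Scope classical_set_scope.

Lemma max_bound (R : realType) (a a' b e : R) : a <= a' <= a + e -> 0 <= e ->
  Num.max a b <= Num.max a' b <= Num.max a b + e.
Proof.
move=> /andP[h1 h2] he; rewrite !maxEle.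
by case: (leP a b) => ?; case: (leP a' b) => ?; apply/andP; split; lra.
Qed.

Lemma min_bound (R : realType) (a a' b b' e : R) : a <= a' <= a + e ->
  b <= b' <= b + e ->
  Num.min a b <= Num.min a' b' <= Num.min a b + e.
Proof.
move=> /andP[h1 h2] /andP[h3 h4]; rewrite !minEle.
by case: (leP a b) => ?; case: (leP a' b') => ?; apply/andP; split; lra.
Qed.

Lemma sum_sub (R : realType) n (F : 'I_n -> R) (p : pred 'I_n) :
  (forall j, 0 <= F j) -> \sum_(j | p j) F j <= \sum_j F j.
Proof.
by move=> F0; rewrite [leRHS](bigID p) /= lerDl sumr_ge0.
Qed.

Lemma mk_bound (R : realType) n (T T' : 'M[R]_(2, n)) (c : R) x :
  0 <= c -> (forall j, 0 <= T mach2 j) ->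
  (forall j, T mach1 j <= T' mach1 j <= T mach1 j + c * T mach2 j) ->
  (forall j, T' mach2 j = T mach2 j) ->
  makespan x T <= makespan x T' <= makespan x T + c * \sum_j T mach2 j.
Proof.
move=> c0 T20 h1 h2; rewrite /makespan.
have -> : \sum_(j < n | ~~ x j) T' mach2 j = \sum_(j < n | ~~ x j) T mach2 j.
  by apply: eq_bigr => j _; rewrite h2.
apply: max_bound; last by rewrite mulr_ge0 // sumr_ge0.
apply/andP; split.
  by apply: ler_sum => j _; have /andP[] := h1 j.
apply: (@le_trans _ _ (\sum_(j < n | x j) (T mach1 j + c * T mach2 j))).
  by apply: ler_sum => j _; have /andP[] := h1 j.
rewrite big_split /= lerD2l -mulr_sumr ler_wpM2l //.
exact: sum_sub.
Qed.

Lemma opt_bound (R : realType) n (T T' : 'M[R]_(2, n)) (c : R) :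
  0 <= c -> (forall j, 0 <= T mach2 j) ->
  (forall j, T mach1 j <= T' mach1 j <= T mach1 j + c * T mach2 j) ->
  (forall j, T' mach2 j = T mach2 j) ->
  opt_makespan T <= opt_makespan T' <= opt_makespan T + c * \sum_j T mach2 j.
Proof.
move=> c0 T20 h1 h2; rewrite /opt_makespan.
elim/big_rec2: _; first exact: mk_bound.
by move=> x y1 y2 _ hy; apply: min_bound => //; exact: mk_bound.
Qed.

Lemma mk_pos (R : realType) n (T : 'M[R]_(2, n)) x :
  (0 < n)%N -> pos_matrix T -> 0 < makespan x T.
Proof.
move=> n0 Tp; pose j0 : 'I_n := Ordinal n0.
rewrite /makespan lt_max.
case hx: (x j0); apply/orP; [left|right];
  rewrite (bigD1 j0) ?hx //=; apply: ltr_pwDl => //;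
  by apply: sumr_ge0 => j _; apply: ltW.
Qed.

Lemma opt_pos (R : realType) n (T : 'M[R]_(2, n)) :
  (0 < n)%N -> pos_matrix T -> 0 < opt_makespan T.
Proof.
move=> n0 Tp; rewrite /opt_makespan.
elim/big_rec: _; first exact: mk_pos.
by move=> x y _ hy; rewrite lt_min hy mk_pos.
Qed.

Lemma mk_le (R : realType) n (T : 'M[R]_(2, n)) x :
  pos_matrix T -> makespan x T <= \sum_j T mach1 j + \sum_j T mach2 j.
Proof.
move=> Tp; rewrite /makespan ge_max; apply/andP; split.
  by rewrite ler_wpDr ?sumr_ge0 // => [j _|]; [apply: ltW | apply: sum_sub => j; apply: ltW].
by rewrite ler_wpDl ?sumr_ge0 // => [j _|]; [apply: ltW | apply: sum_sub => j; apply: ltW].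
Qed.

Lemma mk_meas (R : realType) n (T : 'M[R]_(2, n)) :
  measurable_fun setT (fun z : n.-tuple R => makespan (alloc T z) T).
Proof.
have -> : (fun z : n.-tuple R => makespan (alloc T z) T) =
  (fun z => \sum_(j <- index_enum 'I_n) (if T mach1 j / T mach2 j < tnth z j then T mach1 j else 0))
  \max (fun z => \sum_(j <- index_enum 'I_n) (if T mach1 j / T mach2 j < tnth z j then 0 else T mach2 j)).
  apply/funext => z; rewrite /makespan /= !big_mkcond /=.
  by congr Num.max; rewrite ?big_mkcond; apply: eq_bigr => j _; rewrite ffunE /=;
    case: (T mach1 j / T mach2 j < tnth z j).
apply: measurable_realfun.measurable_maxr; apply: measurable_sum => j;
  apply: measurable_fun_ifT => //; apply: measurable_realfun.measurable_fun_ltr => //;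
  exact: measurable_tnth.
Qed.
Lemma nonatom (R : realType) d (T : measurableType d) (P : probability T R)
  (f : T -> R) (mf : measurable_fun setT f) (a b : R) : a < b ->
  exists x, a < x < b /\ P (f @^-1` [set x]) = 0%E.
Proof.
move=> ab; apply: contrapT => H.
have mF : forall x, measurable (f @^-1` [set x]).
  by move=> x; rewrite -[_ @^-1` _]setTI; apply: mf => //; exact: measurable_set1.
have Hpos : forall x, a < x < b -> (0 < P (f @^-1` [set x]))%E.
  move=> x hx; rewrite lt0e measure_ge0 andbT; apply/eqP => h0.
  by apply: H; exists x.
pose A N := [set x | a < x < b /\ ((N.+1%:R^-1)%:E < P (f @^-1` [set x]))%E].
have Afin : forall N, finite_set (A N).
  move=> N; apply: contrapT => /(infinite_set_fset N.+2) [B BA cardB].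
  have tr : trivIset [set` B] (fun x => f @^-1` [set x]).
    by move=> i j _ _ [z [/= <- <-]].
  have eq1 := measure_fin_bigcup P (finite_fset B) tr (fun x _ => mF x).
  have := probability_le1 P (fin_bigcup_measurable (finite_fset B) (fun x _ => mF x)).
  rewrite eq1.
  have -> : (\sum_(x \in [set` B]) P (f @^-1` [set x]) = \sum_(x <- B) P (f @^-1` [set x]))%E.
    by rewrite (fsbig_seq _ _ (fset_uniq B)).
  apply/negP; rewrite -ltNge.
  apply: (@lt_le_trans _ _ (\sum_(x <- B) (N.+1%:R^-1)%:E)%E); last first.
    rewrite big_seq [leRHS]big_seq; apply: lee_sum => x xB; apply/ltW; have [] := BA x xB => //.
  idtac.
  rewrite sumEFin lte_fin.
  have -> : forall (s : seq R) (c : R), \sum_(x <- s) c = c *+ size s.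
    by move=> s c; elim: s => [|y s IH]; rewrite ?big_nil ?big_cons ?IH ?mulr0n // mulrS.
  rewrite -[_ *+ #|` B|]mulr_natr.
  apply: (@lt_le_trans _ _ (N.+1%:R^-1 * N.+2%:R)).
    by rewrite mulrC -(@ltr_pM2r _ N.+1%:R) ?mul1r -?mulrA ?mulVf ?mulr1 ?ltr_nat //.
  by apply: ler_wpM2l; rewrite ?invr_ge0 // ler_nat.
have cov : `]a, b[ `<=` \bigcup_(N in setT) A N.
  move=> x; rewrite /= in_itv /= => hx.
  have hp := Hpos x hx.
  have fin : P (f @^-1` [set x]) \is a fin_num by apply: fin_num_measure.
  move: hp; rewrite -(fineK fin) lte_fin => /ltr_add_invr [N]; rewrite add0r => hN.
  exists N => //; split => //.
  by rewrite -(fineK fin) lte_fin.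
have : countable `]a, b[.
  apply: sub_countable (subset_card_le cov) _.
  by apply: bigcup_countable => // N _; exact: finite_set_countable.
move=> /countable_lebesgue_measure0; rewrite lebesgue_measure_itv /= lte_fin ab.
move=> /eqP; rewrite -EFinD eqe subr_eq0 => /eqP ba.
by move: ab; rewrite ba ltxx.
Qed.

Theorem lemma2 (R : realType) (n : nat) (P : probability (n.-tuple R) R) :
  (0 < n)%N -> supported_pos P ->
  forall T : 'M[R]_(2, n), pos_matrix T ->
  exists Tk : nat -> 'M[R]_(2, n),
    (forall k, pos_matrix (Tk k)) /\
    (forall k (j : 'I_n),
        P [set z : n.-tuple R | tnth z j = Tk k mach1 j / Tk k mach2 j] = 0%E) /\
    ((fun k => Rn_ratio P (Tk k)) @ \oo --> Rn_ratio P T).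
Proof.
move=> n0 Psupp T Tp.
pose r j := T mach1 j / T mach2 j.
have r0 : forall j, 0 < r j by move=> j; rewrite divr_gt0.
have T2ne : forall j, T mach2 j != 0 by move=> j; rewrite gt_eqF.
have mt : forall j : 'I_n, measurable_fun setT (fun z : n.-tuple R => tnth z j).
  by move=> j; exact: measurable_tnth.
have H : forall kj : nat * 'I_n, exists x, r kj.2 < x < r kj.2 + kj.1.+1%:R^-1 /\
    P [set z : n.-tuple R | tnth z kj.2 = x] = 0%E.
  move=> [k j] /=.
  have := @nonatom _ _ _ P _ (mt j) (r j) (r j + k.+1%:R^-1).
  rewrite ltrDl invr_gt0 ltr0n => /(_ isT).
  by [].
have [rk Hrk] := choice H.
pose Tk k := \matrix_(i < 2, j < n) (if i == mach1 then rk (k, j) * T mach2 j else T mach2 j).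
have Tk1 : forall k j, Tk k mach1 j = rk (k, j) * T mach2 j by move=> k j; rewrite mxE eqxx.
have Tk2 : forall k j, Tk k mach2 j = T mach2 j by move=> k j; rewrite mxE.
have rat : forall k j, Tk k mach1 j / Tk k mach2 j = rk (k, j).
  by move=> k j; rewrite Tk1 Tk2 mulfK.
have rkgt : forall k j, r j < rk (k, j) by move=> k j; have [/andP[]] := Hrk (k, j).
have rklt : forall k j, rk (k, j) < r j + k.+1%:R^-1 by move=> k j; have [/andP[]] := Hrk (k, j).
have T1E : forall j, T mach1 j = r j * T mach2 j by move=> j; rewrite divfK.
have Tkp : forall k, pos_matrix (Tk k).
  move=> k i j; rewrite mxE; case: ifP => _; last exact: Tp.
  by rewrite mulr_gt0 // (lt_trans (r0 j) (rkgt k j)).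
pose c (k : nat) : R := k.+1%:R^-1.
have c0 : forall k, 0 <= c k by move=> k; rewrite invr_ge0.
have c1 : forall k, c k <= 1 by move=> k; rewrite invf_le1 // ?ler1n ?ltr0n.
have T20 : forall j, 0 <= T mach2 j by move=> j; apply: ltW.
have hb : forall k j, T mach1 j <= Tk k mach1 j <= T mach1 j + c k * T mach2 j.
  move=> k j; rewrite Tk1 T1E -mulrDl; apply/andP; split; rewrite ler_pM2r //; apply: ltW;
    [exact: rkgt | exact: rklt].
pose S := \sum_j T mach2 j.
exists Tk; split => //; split.
  by move=> k j; rewrite rat; have [_ ] := Hrk (k, j).
have cvgc : c @ \oo --> 0 by exact: cvg_harmonic.
have squeeze : forall (u : nat -> R) (l : R), (forall k, l <= u k <= l + c k * S) ->
    u k @[k --> \oo] --> l.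
  move=> u l hu; apply: (squeeze_cvgr (f := fun _ => l) (h := fun k => l + c k * S)).
  - exact: nearW.
  - exact: cvg_cst.
  rewrite -[X in _ --> X]addr0; apply: cvgD; first exact: cvg_cst.
  rewrite -(mul0r S); apply: cvgM => //; exact: cvg_cst.
have opt_cvg : (fun k => opt_makespan (Tk k)) @ \oo --> opt_makespan T.
  by apply: squeeze => k; apply: opt_bound => //; move=> j; rewrite Tk2.
have optT0 := opt_pos R n T n0 Tp.
have ptw : forall z, (fun k => makespan (alloc (Tk k) z) (Tk k)) @ \oo -->
    makespan (alloc T z) T.
  move=> z.
  have ev : \forall k \near \oo, alloc (Tk k) z = alloc T z.
    have : \forall k \near \oo, forall j, (rk (k, j) < tnth z j) = (r j < tnth z j).
      apply: filter_forall => j.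
      case: (ltP (r j) (tnth z j)) => h.
        have [N hN] := ltr_add_invr h.
        exists N => // k /= Nk.
        apply/idP; apply: (lt_trans (rklt k j)); apply: le_lt_trans hN.
        by rewrite lerD2l lef_pV2 ?posrE ?ltr0n // ler_nat.
      apply: nearW => k; apply/negbTE; rewrite -leNgt.
      exact: (le_trans h (ltW (rkgt k j))).
    by apply: filterS => k hk; apply/ffunP => j; rewrite !ffunE rat; exact: hk j.
  apply: cvg_trans (near_eq_cvg (f := fun k => makespan (alloc T z) (Tk k)) _) _.
    by apply: filterS ev => k ->.
  by apply: squeeze => k; apply: mk_bound => //; move=> j; rewrite Tk2.
pose fk k (z : n.-tuple R) := (makespan (alloc (Tk k) z) (Tk k))%:E.
pose f (z : n.-tuple R) := (makespan (alloc T z) T)%:E.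
pose C := \sum_j T mach1 j + S + S.
have mfk : forall k, measurable_fun setT (fun z : n.-tuple R => fk k z).
  by move=> k; apply/measurable_EFinP; exact: mk_meas.
have mf : measurable_fun setT (fun z : n.-tuple R => f z) by apply/measurable_EFinP; exact: mk_meas.
have f_f : {ae P, forall z, setT z -> fk ^~ z @ \oo --> f z}.
  apply: aeW => z _; apply/fine_cvgP; split; first exact: nearW.
  exact: ptw.
have ig : P.-integrable setT (EFin \o cst C).
  exact: finite_measure_integrable_cst.
have f_g : {ae P, forall z k, setT z -> `|fk k z| <= (EFin \o cst C) z}%E.
  apply: aeW => z k _; rewrite /fk /= lee_fin ger0_norm; last first.
    by apply: ltW; apply: mk_pos.
  have /andP[_ h] := mk_bound _ _ _ _ _ (alloc (Tk k) z) (c0 k) T20 (hb k) (fun j => Tk2 k j).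
  apply: (le_trans h); rewrite /C; apply: lerD; first exact: (mk_le _ _ _ _ Tp).
  by rewrite -[leRHS]mul1r; apply: ler_wpM2r; [apply: sumr_ge0 | apply: c1].
have [intf _ cvgint] := dominated_convergence measurableT mfk mf f_f ig f_g.
rewrite /Rn_ratio; apply: cvgeM.
- by apply: mule_def_fin => //; exact: integrable_fin_num intf.
- exact: cvgint.
apply/fine_cvgP; split; first exact: nearW.
by apply: cvgV; [rewrite gt_eqF | exact: opt_cvg].
Qed.
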